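(* Let $\nu<0$ and define $\mathcal{R}_\nu:\mathbb{R}\to\mathbb{R}$ by $$\mathcal{R}_\nu(x):=\frac{(H_{\nu-1}(x))^2}{H_{\nu}(x)\,H_{\nu-2}(x)},\qquad x\in\mathbb{R},$$ where $H_\alpha$ denotes the Hermite function of index $\alpha$. Then $\mathcal{R}_\nu$ is strictly decreasing on $\mathbb{R}$.
   Context: For $\alpha<0$, the Hermite function $H_\alpha:\mathbb{R}\to\mathbb{R}$ is the solution of the ODE $u''(x)-2xu'(x)+2\alpha u(x)=0$ given by the integral representation $$H_\alpha(x)=\frac{1}{\Gamma(-\alpha)}\int_0^\infty t^{-\alpha-1}e^{-t^2-2xt}\,dt,\qquad x\in\mathbb{R},$$ where $\Gamma$ is Euler's Gamma function. In particular $H_\alpha(x)>0$ for all $x$ when $\alpha<0$, so $\mathcal{R}_\nu$ is well defined. *)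

(* Defs.v *)
From Stdlib Require Import Reals.
From Coquelicot Require Import Coquelicot.
Open Scope R_scope.

Definition Gamma_fn (s : R) : R :=
  RInt_gen (fun t => Rpower t (s - 1) * exp (- t))
           (at_right 0) (Rbar_locally p_infty).

(* Hermite function of index alpha < 0:
   H_alpha(x) = 1/Gamma(-alpha) * int_0^oo t^(-alpha-1) e^(-t^2 - 2 x t) dt. *)
Definition Hermite (alpha x : R) : R :=
  / Gamma_fn (- alpha) *
  RInt_gen (fun t => Rpower t (- alpha - 1) * exp (- t ^ 2 - 2 * x * t))
           (at_right 0) (Rbar_locally p_infty).

Definition Rnu (nu x : R) : R :=
  (Hermite (nu - 1) x) ^ 2 / (Hermite nu x * Hermite (nu - 2) x).

(* Main.v *)
Require Import Defs.
From Stdlib Require Import Reals Lra Psatz.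
From Coquelicot Require Import Coquelicot.
Open Scope R_scope.

Lemma exp_le' x y : x <= y -> exp x <= exp y.
Proof. intros [H|H]; [left; now apply exp_increasing | subst; lra]. Qed.

Lemma ln_le_sub1 t : 0 < t -> ln t <= t - 1.
Proof. intros Ht. pose proof (exp_ineq1_le (ln t)). rewrite exp_ln in H; lra. Qed.

Lemma pow_exp_bound q t : 0 < q -> 0 < t ->
  Rpower t q <= exp (q * ln q - q) * exp t.
Proof.
  intros Hq Ht. unfold Rpower. rewrite <- exp_plus. apply exp_le'.
  assert (Htq : 0 < t / q) by (apply Rdiv_lt_0_compat; lra).
  pose proof (ln_le_sub1 (t / q) Htq) as H. rewrite ln_div in H by lra.
  assert (Hd : t / q * q = t) by (field; apply Rgt_not_eq; exact Hq).
  assert (q * (ln t - ln q) <= q * (t / q - 1)) by (apply Rmult_le_compat_l; [lra | exact H]).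
  assert (q * (t/q - 1) = t - q) by (field; apply Rgt_not_eq; exact Hq).
  assert (q * (ln t - ln q) = q * ln t - q * ln q) by ring. lra.
Qed.

Lemma quad_bound t b : - t^2 + b * t <= b^2 / 4.
Proof. pose proof (pow2_ge_0 (t - b/2)). nra. Qed.

Lemma exp_taylor2 u : 0 <= exp u - 1 - u <= u^2 * Rmax 1 (exp u).
Proof.
  pose proof (exp_ineq1_le u). pose proof (exp_ineq1_le (-u)).
  assert (Hm : exp u * exp (-u) = 1) by (rewrite <- exp_plus; replace (u + - u) with 0 by ring; apply exp_0).
  pose proof (exp_pos u). pose proof (exp_pos (-u)).
  assert (H3 : exp u * (1 - u) <= 1) by nra.
  split. lra.
  destruct (Rle_lt_dec 0 u).
  - rewrite Rmax_right by lra. nra.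
  - pose proof (Rmax_l 1 (exp u)). nra.
Qed.

Lemma rpower_small p e : 0 < p -> 0 < e -> exists d, 0 < d /\ forall t, 0 < t < d -> Rpower t p < e.
Proof.
  intros Hp He. exists (exp (ln e / p)). split. apply exp_pos.
  intros t [Ht Htd]. unfold Rpower.
  apply ln_increasing in Htd; auto. rewrite ln_exp in Htd.
  rewrite <- (exp_ln e) by auto. apply exp_increasing.
  apply (Rmult_lt_compat_l p) in Htd; auto. 
  replace (p * (ln e / p)) with (ln e) in Htd by (field; lra). lra.
Qed.

Lemma rpower_big p M : 0 < p -> exists N, forall t, N < t -> M < Rpower t p.
Proof.
  intros Hp. exists (exp (Rabs M / p)). intros t Ht.
  assert (0 < t) by (pose proof (exp_pos (Rabs M / p)); lra).
  unfold Rpower.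
  apply ln_increasing in Ht; [|apply exp_pos]. rewrite ln_exp in Ht.
  apply (Rmult_lt_compat_l p) in Ht; auto.
  replace (p * (Rabs M / p)) with (Rabs M) in Ht by (field; lra).
  pose proof (exp_ineq1_le (p * ln t)). pose proof (Rle_abs M). lra.
Qed.

Notation FA := (at_right 0).
Notation FB := (Rbar_locally p_infty).

Lemma ev_prod (P : R * R -> Prop) d M : 0 < d ->
  (forall a b, 0 < a < d -> M < b -> P (a, b)) -> filter_prod FA FB P.
Proof.
  intros Hd H. apply (Filter_prod _ _ _ (fun a => 0 < a < d) (fun b => M < b)).
  - exists (mkposreal d Hd). intros y Hy Hp. simpl. split; auto.
    unfold ball in Hy; simpl in Hy; unfold AbsRing_ball, abs, minus, plus, opp in Hy; simpl in Hy.
    rewrite Ropp_0, Rplus_0_r in Hy. apply Rabs_lt_between in Hy. lra.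
  - exists M. auto.
  - intros; apply H; auto.
Qed.

Lemma ball_R x e y : ball x e y <-> Rabs (y - x) < e.
Proof. unfold ball; simpl; unfold AbsRing_ball, abs, minus, plus, opp; simpl. tauto. Qed.

Lemma mk_gen (f : R -> R) (If : R -> R -> R) l d0 M0 : 0 < d0 ->
  (forall a b, 0 < a < d0 -> M0 < b -> is_RInt f a b (If a b)) ->
  (forall eps : posreal, exists d M, 0 < d /\ forall a b, 0 < a < d -> M < b -> Rabs (If a b - l) < eps) ->
  is_RInt_gen f FA FB l.
Proof.
  intros Hd0 HI Hl. unfold is_RInt_gen.
  apply filterlimi_lim_ext_loc with (f := fun ab => If (fst ab) (snd ab)).
  - apply (ev_prod _ d0 M0); auto.
  - apply filterlim_locally. intros eps. destruct (Hl eps) as (d & M & Hd & H).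
    apply (ev_prod _ d M Hd). intros a b Ha Hb. apply ball_R. simpl. auto.
Qed.

Lemma cont_ex (f : R -> R) u v : (forall t, 0 < t -> continuous f t) -> 0 < u -> 0 < v -> ex_RInt f u v.
Proof.
  intros Hc Hu Hv. apply (@ex_RInt_continuous R_CompleteNormedModule). intros z [Hz _]. apply Hc.
  eapply Rlt_le_trans; [|exact Hz]. apply Rmin_glb_lt; auto.
Qed.

Ltac cex := match goal with H : forall t, 0 < t -> continuous ?f t |- ex_RInt ?f _ _ => apply cont_ex; [exact H | lra | lra] end.

Lemma ex_dom (f g G : R -> R) :
  (forall t, 0 < t -> continuous f t) -> (forall t, 0 < t -> continuous g t) ->
  (forall t, 0 < t -> is_derive G t (g t)) -> (forall t, 0 < t -> Rabs (f t) <= g t) ->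
  (forall eps, 0 < eps -> exists d, 0 < d /\ forall u v, 0 < u -> u <= v -> v < d -> G v - G u < eps) ->
  (forall eps, 0 < eps -> exists M, forall u v, M < u -> u <= v -> G v - G u < eps) ->
  ex_RInt_gen f FA FB.
Proof.
  intros Hcf Hcg HG Hfg H0 Hinf.
  assert (bnd : forall u v, 0 < u -> u <= v -> Rabs (RInt f u v) <= G v - G u).
  { intros u v Hu Huv.
    assert (Hv : 0 < v) by lra.
    assert (Hg : is_RInt g u v (minus (G v) (G u))).
    { apply (@is_RInt_derive R_CompleteNormedModule).
      - intros x [Hx _]. apply HG. eapply Rlt_le_trans; [|exact Hx]. apply Rmin_glb_lt; auto.
      - intros x [Hx _]. apply Hcg. eapply Rlt_le_trans; [|exact Hx]. apply Rmin_glb_lt; auto. }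
    apply (@is_RInt_unique R_CompleteNormedModule) in Hg.
    eapply Rle_trans. apply abs_RInt_le; auto. cex.
    replace (G v - G u) with (RInt g u v) by (rewrite Hg; reflexivity).
    apply RInt_le; auto.
    - apply (ex_RInt_norm f). cex.
    - cex.
    - intros x Hx. apply Hfg. lra. }
  assert (bnd2 : forall u v, 0 < u -> 0 < v -> Rabs (RInt f u v) <= Rabs (G v - G u)).
  { intros u v Hu Hv. destruct (Rle_lt_dec u v).
    - eapply Rle_trans. apply bnd; auto. apply Rle_abs.
    - rewrite <- (@opp_RInt_swap R_CompleteNormedModule) by (cex).
      unfold opp; simpl. rewrite Rabs_Ropp.
      replace (G v - G u) with (- (G u - G v)) by ring. rewrite Rabs_Ropp.
      eapply Rle_trans. apply bnd; auto; lra. apply Rle_abs. }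
  assert (Hcauchy : exists y, filterlim (fun ab => RInt f (fst ab) (snd ab)) (filter_prod FA FB) (locally y)).
  { apply (Hierarchy.filterlim_locally_cauchy (F := filter_prod FA FB)).
    intros eps.
    assert (He2 : 0 < eps / 2) by (pose proof (cond_pos eps); lra).
    destruct (H0 _ He2) as (d & Hd & Hd').
    destruct (Hinf _ He2) as (M & HM).
    exists (fun ab => 0 < fst ab < Rmin d 1 /\ Rmax M 1 < snd ab). split.
    - apply (ev_prod _ (Rmin d 1) (Rmax M 1)). apply Rmin_glb_lt; lra.
      intros; simpl; auto.
    - intros [a b] [a' b'] [[Ha Had] Hb] [[Ha' Had'] Hb']. simpl in *.
      apply ball_R.
      pose proof (Rmin_l d 1). pose proof (Rmin_r d 1). pose proof (Rmax_l M 1). pose proof (Rmax_r M 1).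
      assert (E : RInt f a b = plus (RInt f a a') (plus (RInt f a' b') (RInt f b' b))).
      { rewrite (@RInt_Chasles R_CompleteNormedModule f a' b' b) by (cex).
        rewrite (@RInt_Chasles R_CompleteNormedModule); auto; cex. }
      rewrite E. unfold plus; simpl.
      assert (A1 : Rabs (RInt f a a') < eps / 2).
      { eapply Rle_lt_trans. apply bnd2; lra.
        destruct (Rle_lt_dec a a').
        - pose proof (bnd a a' ltac:(lra) ltac:(lra)). pose proof (Rabs_pos (RInt f a a')).
          rewrite Rabs_right by lra. apply Hd'; lra.
        - pose proof (bnd a' a ltac:(lra) ltac:(lra)). pose proof (Rabs_pos (RInt f a' a)).
          rewrite Rabs_left1 by lra. replace (- (G a' - G a)) with (G a - G a') by ring. apply Hd'; lra. }
      assert (A2 : Rabs (RInt f b' b) < eps / 2).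
      { eapply Rle_lt_trans. apply bnd2; lra.
        destruct (Rle_lt_dec b' b).
        - pose proof (bnd b' b ltac:(lra) ltac:(lra)). pose proof (Rabs_pos (RInt f b' b)).
          rewrite Rabs_right by lra. apply HM; lra.
        - pose proof (bnd b b' ltac:(lra) ltac:(lra)). pose proof (Rabs_pos (RInt f b b')).
          rewrite Rabs_left1 by lra. replace (- (G b - G b')) with (G b' - G b) by ring. apply HM; lra. }
      apply Rabs_lt_between in A1. apply Rabs_lt_between in A2.
      apply Rabs_lt_between. lra. }
  destruct Hcauchy as [y Hy]. exists y.
  unfold is_RInt_gen.
  apply filterlimi_lim_ext_loc with (f := fun ab => RInt f (fst ab) (snd ab)); auto.
  apply (ev_prod _ 1 1). lra. intros a b Ha Hb. simpl. apply (@RInt_correct R_CompleteNormedModule). cex.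
Qed.

Lemma gen_nonneg (g : R -> R) l : is_RInt_gen g FA FB l -> (forall t, 0 < t -> 0 <= g t) -> 0 <= l.
Proof.
  intros H Hg.
  assert (Hn : norm l <= l).
  { apply (@RInt_gen_norm R_CompleteNormedModule FA FB _ _ g g l l); auto.
    - apply (ev_prod _ 1 1). lra. intros; simpl; lra.
    - apply (ev_prod _ 1 1). lra. intros a b Ha Hb x Hx. simpl in Hx.
      unfold norm; simpl; unfold abs; simpl. rewrite Rabs_right. lra. apply Rle_ge, Hg; lra. }
  unfold norm in Hn; simpl in Hn; unfold abs in Hn; simpl in Hn.
  pose proof (Rabs_pos l). lra.
Qed.

Lemma gen_le (f g : R -> R) lf lg : is_RInt_gen f FA FB lf -> is_RInt_gen g FA FB lg ->
  (forall t, 0 < t -> f t <= g t) -> lf <= lg.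
Proof.
  intros Hf Hg Hfg.
  pose proof (is_RInt_gen_minus g f lg lf Hg Hf) as H.
  apply gen_nonneg in H. unfold minus, plus, opp in H; simpl in H. lra.
  intros t Ht. unfold minus, plus, opp; simpl. specialize (Hfg t Ht). lra.
Qed.

Lemma gen_pos (f : R -> R) l : is_RInt_gen f FA FB l -> (forall t, 0 < t -> continuous f t) ->
  (forall t, 0 < t -> 0 <= f t) -> forall t0, 0 < t0 -> 0 < f t0 -> 0 < l.
Proof.
  intros H Hcf Hf t0 Ht0 Hft0.
  assert (He : 0 < f t0 / 2) by lra.
  pose proof (Hcf t0 Ht0) as Hc. unfold continuous in Hc.
  destruct (proj1 (filterlim_locally _ _) Hc (mkposreal _ He)) as [dl Hdl].
  set (r := Rmin dl t0 / 2).
  assert (Hr : 0 < r) by (unfold r; pose proof (Rmin_glb_lt dl t0 0 (cond_pos dl) Ht0); lra).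
  assert (Hr2 : r < t0) by (unfold r; pose proof (Rmin_r dl t0); lra).
  assert (Hr3 : r < dl) by (unfold r; pose proof (Rmin_l dl t0); pose proof (cond_pos dl); lra).
  set (u := t0 - r). set (v := t0 + r).
  assert (Hcp : 0 < RInt f u v).
  { apply Rle_lt_trans with (RInt (fun _ => 0) u v).
    - rewrite RInt_const. unfold scal; simpl; unfold mult; simpl. lra.
    - apply RInt_lt. unfold u, v; lra.
      + intros x Hx. apply Hcf. unfold u in Hx; lra.
      + intros x Hx. apply continuous_const.
      + intros x Hx. assert (B : ball t0 dl x).
        { apply ball_R. unfold u, v in Hx. apply Rabs_lt_between. lra. }
        apply Hdl in B. apply ball_R in B. simpl in B. apply Rabs_lt_between in B. cbv beta. simpl in B. unfold minus, plus, opp in B; simpl in B. lra. }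
  assert (HF := H). unfold is_RInt_gen in HF.
  apply (filterlimi_locally _ l) with (eps := mkposreal _ (ltac:(lra) : 0 < RInt f u v / 2)) in HF.
  assert (HP : filter_prod FA FB (fun ab => 0 < fst ab < u /\ v < snd ab)).
  { apply (ev_prod _ u v). unfold u; lra. intros; simpl; auto. }
  destruct (filter_ex _ (filter_and _ _ HF HP)) as [[a b] [[z [Hz Hb]] [[Ha Hau] Hvb]]].
  simpl in *.
  apply (@is_RInt_unique R_CompleteNormedModule) in Hz.
  apply ball_R in Hb. simpl in Hb. apply Rabs_lt_between in Hb.
  assert (HE : RInt f a b = RInt f a u + RInt f u v + RInt f v b).
  { rewrite <- (@RInt_Chasles R_CompleteNormedModule f a u b) by (apply cont_ex; auto; unfold u, v in *; lra).
    rewrite <- (@RInt_Chasles R_CompleteNormedModule f u v b) by (apply cont_ex; auto; unfold u, v in *; lra).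
    unfold plus; simpl. ring. }
  assert (0 <= RInt f a u).
  { apply RInt_ge_0. lra. apply cont_ex; auto; lra. intros; apply Hf; lra. }
  assert (0 <= RInt f v b).
  { apply RInt_ge_0. unfold u,v in *; lra. apply cont_ex; auto; unfold u, v in *; lra. intros; apply Hf; unfold v in *; lra. }
  unfold minus, plus, opp in Hb; simpl in Hb. simpl in Hz. lra.
Qed.

Definition Fp (c x t : R) := Rpower t c * exp (- t ^ 2 - 2 * x * t).

Lemma Fp_cont c x t : 0 < t -> continuous (Fp c x) t.
Proof. intros Ht. apply (@ex_derive_continuous R_AbsRing R_NormedModule). unfold Fp, Rpower. auto_derive. lra. Qed.

Lemma Fp_pos c x t : 0 < Fp c x t.
Proof. unfold Fp, Rpower. apply Rmult_lt_0_compat; apply exp_pos. Qed.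

Lemma rpow_mul_t c t : 0 < t -> exp ((c + 1) * ln t) = exp (c * ln t) * t.
Proof. intros Ht. replace ((c+1) * ln t) with (c * ln t + ln t) by ring. rewrite exp_plus, exp_ln; auto. Qed.

Lemma pow1p_bound p : 0 < p -> exists C, 0 < C /\ forall t, 0 < t -> (1 + Rpower t p)^2 <= 2 + 2 * C * exp t.
Proof.
  intros Hp. exists (exp (2 * p * ln (2 * p) - 2 * p)). split. apply exp_pos.
  intros t Ht. pose proof (pow_exp_bound (2 * p) t ltac:(lra) Ht) as H.
  assert (E : Rpower t (2 * p) = Rpower t p ^ 2).
  { unfold Rpower. simpl. rewrite Rmult_1_r, <- exp_plus. f_equal. ring. }
  rewrite E in H. pose proof (pow2_ge_0 (Rpower t p - 1)). nra.
Qed.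

Lemma onep_nz y : 0 < y -> (1 + y) * ((1 + y) * 1) <> 0.
Proof. intros; apply Rgt_not_eq; nra. Qed.

Lemma onep_nz1 y : 0 < y -> 1 + y <> 0.
Proof. intros; apply Rgt_not_eq; lra. Qed.

Lemma ex_pow_dom c (h : R -> R) K : -1 < c ->
  (forall t, 0 < t -> continuous h t) -> (forall t, 0 < t -> 0 <= h t) ->
  (forall t, 0 < t -> h t * (1 + Rpower t (c + 1))^2 <= K) ->
  ex_RInt_gen (fun t => Rpower t c * h t) FA FB.
Proof.
  intros Hc Hch Hh HK.
  set (p := c + 1). assert (Hp : 0 < p) by (unfold p; lra).
  set (K' := Rmax K 1). assert (HK' : 0 < K') by (unfold K'; pose proof (Rmax_r K 1); lra).
  apply (ex_dom _ (fun t => K' * (exp (c * ln t) / (1 + exp ((c+1) * ln t))^2))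
                  (fun t => K' / p * (exp ((c+1) * ln t) / (1 + exp ((c+1) * ln t))))).
  - intros t Ht. apply (continuous_mult (fun t => Rpower t c) h).
    + apply (@ex_derive_continuous R_AbsRing R_NormedModule). unfold Rpower. auto_derive. lra.
    + auto.
  - intros t Ht. apply (@ex_derive_continuous R_AbsRing R_NormedModule). auto_derive.
    repeat split; try exact Ht. apply onep_nz, exp_pos.
  - intros t Ht. auto_derive.
    + repeat split; try exact Ht. apply onep_nz1, exp_pos.
    + rewrite rpow_mul_t by exact Ht. fold p.
      pose proof (exp_pos (c * ln t)). field.
      repeat split; apply Rgt_not_eq; clear -Ht Hp H; nra.
  - intros t Ht. pose proof (HK t Ht) as HKt. pose proof (Hh t Ht).
    assert (E0 : 0 < exp (c * ln t)) by apply exp_pos.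
    assert (E1 : 0 < exp ((c+1) * ln t)) by apply exp_pos.
    unfold Rpower in *. fold p. fold p in HKt. fold p in E1.
    rewrite Rabs_right by (apply Rle_ge; apply Rmult_le_pos; lra).
    set (E := exp (p * ln t)) in *. set (D := (1 + E)^2).
    assert (HD : 0 < D) by (unfold D; nra).
    assert (h t <= K' / D).
    { apply (Rmult_le_reg_r D); auto. unfold Rdiv. rewrite Rmult_assoc, Rinv_l by lra.
      pose proof (Rmax_l K 1) as HmK. fold K' in HmK. unfold D. lra. }
    unfold Rdiv in *. rewrite <- Rmult_assoc, (Rmult_comm K'), Rmult_assoc.
    apply Rmult_le_compat_l; lra.
  - intros eps Heps.
    destruct (rpower_small p (eps * p / K')) as [d [Hd Hd']]; auto.
    { apply Rdiv_lt_0_compat; auto. nra. }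
    exists d. split; auto. intros u v Hu Huv Hv.
    pose proof (Hd' v ltac:(lra)) as Hv'. unfold Rpower in Hv'. fold p.
    set (Eu := exp (p * ln u)) in *. set (Ev := exp (p * ln v)) in *.
    assert (0 < Eu) by apply exp_pos. assert (0 < Ev) by apply exp_pos.
    assert (0 <= K' / p * (Eu / (1 + Eu))) by (apply Rmult_le_pos; apply Rlt_le, Rdiv_lt_0_compat; lra).
    assert (K' / p * (Ev / (1 + Ev)) <= K' / p * Ev).
    { apply Rmult_le_compat_l. apply Rlt_le, Rdiv_lt_0_compat; lra.
      apply (Rmult_le_reg_r (1 + Ev)); [lra|]. unfold Rdiv. rewrite Rmult_assoc, Rinv_l by lra. nra. }
    assert (K' / p * Ev < eps).
    { apply (Rmult_lt_reg_r p); auto. unfold Rdiv. 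
      replace (K' * / p * Ev * p) with (K' * Ev) by (field; lra).
      apply (Rmult_lt_compat_l K') in Hv'; auto.
      replace (K' * (eps * p / K')) with (eps * p) in Hv' by (field; lra). lra. }
    lra.
  - intros eps Heps.
    destruct (rpower_big p (K' / (p * eps)) Hp) as [N HN].
    exists (Rmax N 0). intros u v Hu Huv.
    pose proof (Rmax_l N 0). pose proof (Rmax_r N 0).
    pose proof (HN u ltac:(lra)) as Hu'. unfold Rpower in Hu'. fold p.
    set (Eu := exp (p * ln u)) in *. set (Ev := exp (p * ln v)) in *.
    assert (0 < Eu) by apply exp_pos. assert (0 < Ev) by apply exp_pos.
    assert (K' / p * (Ev / (1 + Ev)) <= K' / p).
    { rewrite <- (Rmult_1_r (K' / p)) at 2. apply Rmult_le_compat_l. apply Rlt_le, Rdiv_lt_0_compat; lra.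
      apply (Rmult_le_reg_r (1 + Ev)); [lra|]. unfold Rdiv. rewrite Rmult_assoc, Rinv_l by lra. lra. }
    assert (K' / p - K' / p * (Eu / (1 + Eu)) < eps).
    { replace (K' / p - K' / p * (Eu / (1 + Eu))) with (K' / (p * (1 + Eu))) by (field; lra).
      apply (Rmult_lt_reg_r (p * (1 + Eu))). nra.
      unfold Rdiv. rewrite Rmult_assoc, Rinv_l by nra.
      assert (K' / (p * eps) * (p * eps) = K') by (field; lra).
      assert (K' / (p * eps) * (p * eps) < Eu * (p * eps)) by (apply Rmult_lt_compat_r; nra).
      nra. }
    lra.
Qed.

Lemma h_bound1 x t : exp (- t ^ 2 - 2 * x * t) <= exp (x ^ 2).
Proof. apply exp_le'. pose proof (quad_bound t (- 2 * x)). nra. Qed.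

Lemma h_bound2 x t b : exp (- t ^ 2 - 2 * x * t) * exp (b * t) <= exp ((b - 2 * x) ^ 2 / 4).
Proof. rewrite <- exp_plus. apply exp_le'. pose proof (quad_bound t (b - 2 * x)). nra. Qed.

Lemma ex_Fp c x : -1 < c -> ex_RInt_gen (Fp c x) FA FB.
Proof.
  intros Hc. destruct (pow1p_bound (c + 1)) as [C [HC HCb]]. lra.
  apply (ex_pow_dom c (fun t => exp (- t ^ 2 - 2 * x * t)) (2 * exp (x ^ 2) + 2 * C * exp ((1 - 2 * x) ^ 2 / 4))); auto.
  - intros t Ht. apply (@ex_derive_continuous R_AbsRing R_NormedModule). auto_derive. auto.
  - intros t Ht. apply Rlt_le, exp_pos.
  - intros t Ht. pose proof (HCb t Ht). pose proof (h_bound1 x t).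
    pose proof (h_bound2 x t 1). rewrite Rmult_1_l in H1.
    pose proof (exp_pos (- t ^ 2 - 2 * x * t)).
    apply Rle_trans with (exp (- t ^ 2 - 2 * x * t) * (2 + 2 * C * exp t)).
    apply Rmult_le_compat_l; lra. nra.
Qed.

Definition Kf c x : R := RInt_gen (Fp c x) FA FB.

Lemma is_Kf c x : -1 < c -> is_RInt_gen (Fp c x) FA FB (Kf c x).
Proof. intros Hc. apply (@RInt_gen_correct R_CompleteNormedModule FA FB _ _ (Fp c x)). apply ex_Fp; auto. Qed.

Lemma Kf_pos c x : -1 < c -> 0 < Kf c x.
Proof.
  intros Hc. apply (gen_pos (Fp c x) _ (is_Kf c x Hc)) with (t0 := 1).
  - intros; apply Fp_cont; auto.
  - intros; apply Rlt_le, Fp_pos.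
  - exact Rlt_0_1.
  - apply Fp_pos.
Qed.

Lemma Gamma_pos s : 0 < s -> 0 < Gamma_fn s.
Proof.
  intros Hs. destruct (pow1p_bound (s - 1 + 1)) as [C [HC HCb]]. lra.
  assert (Hex : ex_RInt_gen (fun t => Rpower t (s - 1) * exp (- t)) FA FB).
  { apply (ex_pow_dom (s - 1) (fun t => exp (- t)) (2 + 2 * C)); auto. lra.
    - intros t Ht. apply (@ex_derive_continuous R_AbsRing R_NormedModule). auto_derive. auto.
    - intros t Ht. apply Rlt_le, exp_pos.
    - intros t Ht. pose proof (HCb t Ht).
      assert (exp (- t) * exp t = 1) by (rewrite <- exp_plus; replace (- t + t) with 0 by ring; apply exp_0).
      pose proof (exp_pos (- t)). assert (exp (-t) <= 1) by (rewrite <- exp_0; apply exp_le'; lra).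
      apply Rle_trans with (exp (- t) * (2 + 2 * C * exp t)).
      apply Rmult_le_compat_l; lra. nra. }
  unfold Gamma_fn. apply (gen_pos _ _ (@RInt_gen_correct R_CompleteNormedModule FA FB _ _ _ Hex)) with (t0 := 1).
  - intros t Ht. apply (@ex_derive_continuous R_AbsRing R_NormedModule). unfold Rpower. auto_derive. auto.
  - intros t Ht. apply Rlt_le, Rmult_lt_0_compat; apply exp_pos.
  - exact Rlt_0_1.
  - apply Rmult_lt_0_compat; apply exp_pos.
Qed.

Lemma rpow_mul_t2 c t : 0 < t -> exp ((c + 2) * ln t) = exp (c * ln t) * t ^ 2.
Proof. intros Ht. replace ((c+2) * ln t) with (c * ln t + ln t + ln t) by ring. rewrite !exp_plus, exp_ln; auto. ring. Qed.

Definition Pf c x t := exp ((c + 1) * ln t) * exp (- t ^ 2 - 2 * x * t).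

Lemma Pf_nonneg c x t : 0 <= Pf c x t.
Proof. unfold Pf. apply Rlt_le, Rmult_lt_0_compat; apply exp_pos. Qed.

Lemma Pf_small0 c x eps : -1 < c -> 0 < eps -> exists d, 0 < d /\ forall t, 0 < t < d -> Pf c x t < eps.
Proof.
  intros Hc He. destruct (rpower_small (c + 1) (eps / exp (x ^ 2))) as [d [Hd H]]; try lra.
  apply Rdiv_lt_0_compat; auto; apply exp_pos.
  exists d. split; auto. intros t Ht. specialize (H t Ht). unfold Rpower in H. unfold Pf.
  pose proof (h_bound1 x t). pose proof (exp_pos (x ^ 2)). pose proof (exp_pos ((c + 1) * ln t)).
  apply Rle_lt_trans with (exp ((c + 1) * ln t) * exp (x ^ 2)).
  apply Rmult_le_compat_l; lra.
  apply (Rmult_lt_compat_r (exp (x ^ 2))) in H; auto.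
  replace (eps / exp (x ^ 2) * exp (x ^ 2)) with eps in H by (field; lra). lra.
Qed.

Lemma Pf_smallinf c x eps : -1 < c -> 0 < eps -> exists M, forall t, M < t -> Pf c x t < eps.
Proof.
  intros Hc He.
  set (p := c + 1). assert (Hp : 0 < p) by (unfold p; lra).
  set (C0 := exp (p * ln p - p)). set (B := exp ((2 - 2 * x) ^ 2 / 4)).
  assert (HC0 : 0 < C0) by apply exp_pos. assert (HB : 0 < B) by apply exp_pos.
  exists (Rmax (C0 * B / eps) 1). intros t Ht.
  pose proof (Rmax_l (C0 * B / eps) 1). pose proof (Rmax_r (C0 * B / eps) 1).
  assert (Ht0 : 0 < t) by lra.
  pose proof (pow_exp_bound p t Hp Ht0) as H1. unfold Rpower in H1. fold C0 in H1.
  pose proof (h_bound2 x t 2) as H2. fold B in H2.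
  set (h := exp (- t ^ 2 - 2 * x * t)) in *.
  assert (Hh : 0 < h) by apply exp_pos.
  assert (E2 : exp (2 * t) = exp t * exp t) by (rewrite <- exp_plus; f_equal; ring).
  pose proof (exp_ineq1_le t). pose proof (exp_pos t).
  unfold Pf. fold p. fold h.
  apply Rle_lt_trans with (C0 * exp t * h).
  { apply Rmult_le_compat_r; lra. }
  assert (Hk : exp t * h * exp t <= B) by (rewrite E2 in H2; nra).
  assert (Hk2 : exp t * h * (1 + t) <= B) by nra.
  assert (Hk3 : C0 * exp t * h * t < C0 * B).
  { assert (exp t * h * t < exp t * h * (1 + t)) by (apply Rmult_lt_compat_l; [apply Rmult_lt_0_compat|]; lra). nra. }
  assert (C0 * B / eps * eps = C0 * B) by (field; lra).
  assert (C0 * B < eps * t) by nra.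
  apply (Rmult_lt_reg_r t); auto. nra.
Qed.

Lemma ibp c x : -1 < c -> (c + 1) * Kf c x = 2 * Kf (c + 2) x + 2 * x * Kf (c + 1) x.
Proof.
  intros Hc.
  set (phi := fun t => (c + 1) * Fp c x t - 2 * Fp (c + 2) x t - 2 * x * Fp (c + 1) x t).
  assert (H1 : is_RInt_gen phi FA FB
     (minus (minus (scal (c + 1) (Kf c x)) (scal 2 (Kf (c + 2) x))) (scal (2 * x) (Kf (c + 1) x)))).
  { pose proof (is_Kf c x Hc) as K0. pose proof (is_Kf (c+1) x ltac:(lra)) as K1.
    pose proof (is_Kf (c+2) x ltac:(lra)) as K2.
    pose proof (@is_RInt_gen_minus R_NormedModule FA FB _ _ _ _ _ _
      (@is_RInt_gen_minus R_NormedModule FA FB _ _ _ _ _ _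
         (@is_RInt_gen_scal R_NormedModule FA FB _ _ _ (c+1) _ K0)
         (@is_RInt_gen_scal R_NormedModule FA FB _ _ _ 2 _ K2))
      (@is_RInt_gen_scal R_NormedModule FA FB _ _ _ (2*x) _ K1)) as H.
    apply (@is_RInt_gen_ext R_NormedModule FA FB _ _ _ phi _) in H; [exact H|].
    apply (ev_prod _ 1 0); [lra|]. intros a b _ _ y _.
    unfold phi, minus, plus, opp, scal; simpl; unfold mult; simpl. ring. }
  assert (H2 : is_RInt_gen phi FA FB 0).
  { apply (mk_gen phi (fun a b => Pf c x b - Pf c x a) 0 1 1). lra.
    - intros a b Ha Hb.
      assert (Hm : 0 < Rmin a b) by (apply Rmin_glb_lt; lra).
      apply (@is_RInt_derive R_CompleteNormedModule (Pf c x) phi).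
      + intros t [Ht _]. assert (Ht0 : 0 < t) by lra.
        unfold Pf. auto_derive. auto.
        unfold phi, Fp, Rpower. rewrite rpow_mul_t2 by auto. rewrite rpow_mul_t by auto.
        replace (- (t * (t * 1)) + - (2 * x * t)) with (- t ^ 2 - 2 * x * t) by ring.
        field. apply Rgt_not_eq; auto.
      + intros t [Ht _]. assert (Ht0 : 0 < t) by lra.
        apply (@ex_derive_continuous R_AbsRing R_NormedModule).
        unfold phi, Fp, Rpower. auto_derive. repeat split; auto.
    - intros eps. assert (He2 : 0 < eps / 2) by (pose proof (cond_pos eps); lra).
      destruct (Pf_small0 c x _ Hc He2) as [d [Hd Hd']].
      destruct (Pf_smallinf c x _ Hc He2) as [M HM].
      exists d, M. split; auto. intros a b Ha Hb.
      specialize (Hd' a Ha). specialize (HM b Hb).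
      pose proof (Pf_nonneg c x a). pose proof (Pf_nonneg c x b).
      rewrite Rminus_0_r. apply Rabs_lt_between. lra. }
  apply (@is_RInt_gen_unique R_CompleteNormedModule FA FB _ _) in H1.
  apply (@is_RInt_gen_unique R_CompleteNormedModule FA FB _ _) in H2.
  rewrite H2 in H1. unfold minus, plus, opp, scal in H1; simpl in H1; unfold mult in H1; simpl in H1.
  lra.
Qed.

Lemma Fp_diff_bound c x h t : Rabs h <= 1 -> 0 < t ->
  0 <= Fp c (x + h) t - Fp c x t + 2 * h * Fp (c + 1) x t <= 4 * h ^ 2 * Fp (c + 2) (x - 1) t.
Proof.
  intros Hh Ht. unfold Fp, Rpower. rewrite rpow_mul_t, rpow_mul_t2 by auto.
  set (E := exp (c * ln t)). set (h0 := exp (- t ^ 2 - 2 * x * t)).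
  assert (e1 : exp (- t ^ 2 - 2 * (x + h) * t) = h0 * exp (- 2 * h * t)) by (unfold h0; rewrite <- exp_plus; f_equal; ring).
  assert (e2 : exp (- t ^ 2 - 2 * (x - 1) * t) = h0 * exp (2 * t)) by (unfold h0; rewrite <- exp_plus; f_equal; ring).
  rewrite e1, e2.
  assert (HE : 0 < E) by apply exp_pos. assert (Hh0 : 0 < h0) by apply exp_pos.
  assert (HEh : 0 < E * h0) by (apply Rmult_lt_0_compat; auto).
  pose proof (exp_taylor2 (- 2 * h * t)) as [T1 T2].
  assert (M : Rmax 1 (exp (- 2 * h * t)) <= exp (2 * t)).
  { apply Rmax_lub. rewrite <- exp_0. apply exp_le'. lra.
    apply exp_le'. apply Rabs_le_between in Hh. nra. }
  assert (T3 : exp (- 2 * h * t) - 1 - - 2 * h * t <= 4 * h ^ 2 * t ^ 2 * exp (2 * t)).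
  { eapply Rle_trans; [exact T2|]. replace ((-2 * h * t) ^ 2) with (4 * h ^ 2 * t ^ 2) by ring.
    apply Rmult_le_compat_l; auto. nra. }
  replace (E * (h0 * exp (- 2 * h * t)) - E * h0 + 2 * h * (E * t * h0))
    with (E * h0 * (exp (- 2 * h * t) - 1 - - 2 * h * t)) by ring.
  replace (4 * h ^ 2 * (E * t ^ 2 * (h0 * exp (2 * t))))
    with (E * h0 * (4 * h ^ 2 * t ^ 2 * exp (2 * t))) by ring.
  split. apply Rmult_le_pos; lra. apply Rmult_le_compat_l; lra.
Qed.

Lemma Kf_diff_bound c x h : -1 < c -> Rabs h <= 1 ->
  0 <= Kf c (x + h) - Kf c x + 2 * h * Kf (c + 1) x <= 4 * h ^ 2 * Kf (c + 2) (x - 1).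
Proof.
  intros Hc Hh.
  pose proof (is_Kf c x Hc) as K0. pose proof (is_Kf c (x + h) Hc) as K0h.
  pose proof (is_Kf (c+1) x ltac:(lra)) as K1. pose proof (is_Kf (c+2) (x - 1) ltac:(lra)) as K2.
  pose proof (@is_RInt_gen_plus R_NormedModule FA FB _ _ _ _ _ _
      (@is_RInt_gen_minus R_NormedModule FA FB _ _ _ _ _ _ K0h K0)
      (@is_RInt_gen_scal R_NormedModule FA FB _ _ _ (2 * h) _ K1)) as H.
  pose proof (@is_RInt_gen_scal R_NormedModule FA FB _ _ _ (4 * h ^ 2) _ K2) as H2.
  split.
  - apply gen_nonneg in H.
    + unfold minus, plus, opp, scal in H; simpl in H; unfold mult in H; simpl in H. lra.
    + intros t Ht. unfold minus, plus, opp, scal; simpl; unfold mult; simpl.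
      pose proof (Fp_diff_bound c x h t Hh Ht). lra.
  - pose proof (gen_le _ _ _ _ H H2) as H3.
    assert (H4 : forall t : R, 0 < t -> plus (minus (Fp c (x + h) t) (Fp c x t)) (scal (2 * h) (Fp (c + 1) x t)) <= scal (4 * h ^ 2) (Fp (c + 2) (x - 1) t)).
    2: { specialize (H3 H4). unfold minus, plus, opp, scal in H3; simpl in H3; unfold mult in H3; simpl in H3. lra. }
    + intros t Ht. unfold minus, plus, opp, scal; simpl; unfold mult; simpl.
      pose proof (Fp_diff_bound c x h t Hh Ht). lra.
Qed.

Lemma Kf_deriv c x : -1 < c -> is_derive (fun y => Kf c y) x (- 2 * Kf (c + 1) x).
Proof.
  intros Hc. apply is_derive_Reals. intros eps Heps.
  set (B := Kf (c + 2) (x - 1)). assert (HB : 0 < B) by (apply Kf_pos; lra).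
  assert (Hd : 0 < Rmin 1 (eps / (4 * B))) by (apply Rmin_glb_lt; [lra| apply Rdiv_lt_0_compat; lra]).
  exists (mkposreal _ Hd). intros h Hh0 Hh. simpl in Hh.
  pose proof (Rmin_l 1 (eps / (4 * B))). pose proof (Rmin_r 1 (eps / (4 * B))).
  destruct (Kf_diff_bound c x h Hc ltac:(lra)) as [L U]. fold B in U.
  replace ((Kf c (x + h) - Kf c x) / h - - 2 * Kf (c + 1) x)
    with ((Kf c (x + h) - Kf c x + 2 * h * Kf (c + 1) x) / h) by (field; auto).
  unfold Rdiv. rewrite Rabs_mult, Rabs_Rinv by auto.
  rewrite (Rabs_right (Kf c (x + h) - Kf c x + 2 * h * Kf (c + 1) x)) by lra.
  assert (Hah : 0 < Rabs h) by (apply Rabs_pos_lt; auto).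
  apply (Rmult_lt_reg_r (Rabs h)); auto.
  rewrite Rmult_assoc, Rinv_l by lra. rewrite Rmult_1_r.
  assert (h ^ 2 = Rabs h * Rabs h) by (rewrite <- Rabs_mult; simpl; rewrite Rmult_1_r; rewrite Rabs_right; [ring|]; apply Rle_ge; nra).
  assert (4 * B * Rabs h < eps).
  { apply (Rmult_lt_compat_l (4 * B)) in Hh; [|lra].
    assert (Hm : 4 * B * Rmin 1 (eps/(4*B)) <= 4*B*(eps/(4*B))) by (apply Rmult_le_compat_l; [lra|exact H0]).
    replace (4*B*(eps/(4*B))) with eps in Hm by (field; lra). lra. }
  nra.
Qed.

Lemma Fp_shift c x k t : 0 < t -> Fp (c + INR k) x t = Fp c x t * t ^ k.
Proof. intros Ht. unfold Fp. rewrite Rpower_plus, Rpower_pow by auto. ring. Qed.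

Lemma quad_pos c x c0 c1 c2 : -1 < c -> (c0 <> 0 \/ c1 <> 0 \/ c2 <> 0) ->
  0 < c0 ^ 2 * Kf c x + 2 * c0 * c1 * Kf (c + 1) x + (c1 ^ 2 + 2 * c0 * c2) * Kf (c + 2) x
      + 2 * c1 * c2 * Kf (c + 3) x + c2 ^ 2 * Kf (c + 4) x.
Proof.
  intros Hc Hnz.
  pose proof (is_Kf c x Hc) as K0. pose proof (is_Kf (c+1) x ltac:(lra)) as K1.
  pose proof (is_Kf (c+2) x ltac:(lra)) as K2. pose proof (is_Kf (c+3) x ltac:(lra)) as K3.
  pose proof (is_Kf (c+4) x ltac:(lra)) as K4.
  pose proof (@is_RInt_gen_plus R_NormedModule FA FB _ _ _ _ _ _
    (@is_RInt_gen_plus R_NormedModule FA FB _ _ _ _ _ _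
     (@is_RInt_gen_plus R_NormedModule FA FB _ _ _ _ _ _
      (@is_RInt_gen_plus R_NormedModule FA FB _ _ _ _ _ _
        (@is_RInt_gen_scal R_NormedModule FA FB _ _ _ (c0 ^ 2) _ K0)
        (@is_RInt_gen_scal R_NormedModule FA FB _ _ _ (2 * c0 * c1) _ K1))
      (@is_RInt_gen_scal R_NormedModule FA FB _ _ _ (c1 ^ 2 + 2 * c0 * c2) _ K2))
     (@is_RInt_gen_scal R_NormedModule FA FB _ _ _ (2 * c1 * c2) _ K3))
    (@is_RInt_gen_scal R_NormedModule FA FB _ _ _ (c2 ^ 2) _ K4)) as H.
  set (g := fun t => Fp c x t * (c0 + c1 * t + c2 * t ^ 2) ^ 2).
  apply (@is_RInt_gen_ext R_NormedModule FA FB _ _ _ g _) in H.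
  2: { apply (ev_prod _ 1 0); [lra|]. intros a b Ha Hb y Hy. simpl in Hy.
       assert (Hy0 : 0 < y) by (pose proof (Rmin_glb_lt a b 0 ltac:(lra) ltac:(lra)); lra).
       unfold g, plus, scal; simpl; unfold mult; simpl.
       replace (c + 1) with (c + INR 1) by (simpl; ring).
       replace (c + 2) with (c + INR 2) by (simpl; ring).
       replace (c + 3) with (c + INR 3) by (simpl; ring).
       replace (c + 4) with (c + INR 4) by (simpl; ring).
       rewrite !Fp_shift by auto. ring. }
  unfold plus, scal in H; simpl in H; unfold mult in H; simpl in H.
  assert (Hpoly : exists t0, 0 < t0 /\ c0 + c1 * t0 + c2 * t0 ^ 2 <> 0).
  { destruct (Req_dec (c0 + c1 * 1 + c2 * 1 ^ 2) 0).
    destruct (Req_dec (c0 + c1 * 2 + c2 * 2 ^ 2) 0).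
    destruct (Req_dec (c0 + c1 * 3 + c2 * 3 ^ 2) 0).
    - exfalso. assert (c2 = 0) by nra. assert (c1 = 0) by nra. assert (c0 = 0) by nra. tauto.
    - exists 3; split; auto; lra.
    - exists 2; split; auto; lra.
    - exists 1; split; auto; lra. }
  destruct Hpoly as [t0 [Ht0 Hp0]].
  apply (gen_pos g _ H) with (t0 := t0); auto.
  - intros t Ht. apply (@ex_derive_continuous R_AbsRing R_NormedModule).
    unfold g, Fp, Rpower. auto_derive. auto.
  - intros t Ht. unfold g. apply Rmult_le_pos. apply Rlt_le, Fp_pos. apply pow2_ge_0.
  - unfold g. apply Rmult_lt_0_compat. apply Fp_pos.
    set (y := c0 + c1 * t0 + c2 * t0 ^ 2) in *.
    assert (0 <= y ^ 2) by apply pow2_ge_0.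
    destruct H0; auto. exfalso. apply Hp0.
    assert (Hyy : y * y = 0) by (rewrite H0; ring).
    apply Rmult_integral in Hyy. tauto.
Qed.

Lemma alg_key (a x J0 J1 J2 J3 J4 : R) : 0 < J0 ->
  a * J0 = 2 * J2 + 2 * x * J1 -> (a + 1) * J1 = 2 * J3 + 2 * x * J2 ->
  (a + 2) * J2 = 2 * J4 + 2 * x * J3 -> 0 < J0 * J2 - J1 ^ 2 ->
  (let A := J0 * J2 - J1 ^ 2 in
   let c0 := a * A - J1 ^ 2 in let c1 := J0 * J1 - 2 * x * A in let c2 := -2 * A in
   0 < c0 ^ 2 * J0 + 2 * c0 * c1 * J1 + (c1 ^ 2 + 2 * c0 * c2) * J2 + 2 * c1 * c2 * J3 + c2 ^ 2 * J4) ->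
  J1 ^ 2 * J2 + J0 * J1 * J3 < 2 * J0 * J2 ^ 2.
Proof.
  intros HJ0 I0 I1 I2 HA HQ.
  assert (e4 : J4 = ((a + 2) * J2 - 2 * x * J3) / 2) by lra.
  assert (e3 : J3 = ((a + 1) * J1 - 2 * x * J2) / 2) by lra.
  assert (ea : a = (2 * J2 + 2 * x * J1) / J0) by (apply (Rmult_eq_reg_r J0); [|lra]; field_simplify; lra).
  simpl in HQ. subst J4. subst J3. subst a.
  set (T := 2 * J0 * J2 ^ 2 - J1 ^ 2 * J2 - J0 * J1 * (((2 * J2 + 2 * x * J1) / J0 + 1) * J1 - 2 * x * J2) / 2).
  set (A := J0 * J2 - J1 ^ 2) in *.
  match type of HQ with 0 < ?Q => assert (EQ : Q = 2 * A * T) end.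
  { unfold T, A. field. lra. }
  rewrite EQ in HQ.
  assert (0 < T).
  { destruct (Rle_lt_dec T 0); auto. exfalso. assert (2 * A * T <= 0). 
    { rewrite <- (Rmult_0_r (2 * A)). apply Rmult_le_compat_l; lra. } lra. }
  unfold T in H. lra.
Qed.

Lemma Hermite_Kf alpha x : Hermite alpha x = / Gamma_fn (- alpha) * Kf (- alpha - 1) x.
Proof. reflexivity. Qed.

Lemma key_ineq c x : -1 < c ->
  Kf (c + 1) x ^ 2 * Kf (c + 2) x + Kf c x * Kf (c + 1) x * Kf (c + 3) x < 2 * Kf c x * Kf (c + 2) x ^ 2.
Proof.
  intros Hc.
  pose proof (ibp c x Hc) as I0.
  pose proof (ibp (c + 1) x ltac:(lra)) as I1.
  pose proof (ibp (c + 2) x ltac:(lra)) as I2.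
  replace (c + 1 + 1) with (c + 2) in I1 by ring. replace (c + 1 + 2) with (c + 3) in I1 by ring.
  replace (c + 2 + 1) with (c + 3) in I2 by ring. replace (c + 2 + 2) with (c + 4) in I2 by ring.
  set (J0 := Kf c x) in *. set (J1 := Kf (c + 1) x) in *. set (J2 := Kf (c + 2) x) in *.
  set (J3 := Kf (c + 3) x) in *. set (J4 := Kf (c + 4) x) in *.
  assert (H0 : 0 < J0) by (apply Kf_pos; lra).
  assert (HA : 0 < J0 * J2 - J1 ^ 2).
  { pose proof (quad_pos c x J1 (- J0) 0 Hc ltac:(right; left; lra)) as Q.
    fold J0 J1 J2 J3 J4 in Q.
    assert (E : J1 ^ 2 * J0 + 2 * J1 * - J0 * J1 + ((- J0) ^ 2 + 2 * J1 * 0) * J2 + 2 * - J0 * 0 * J3 + 0 ^ 2 * J4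
               = J0 * (J0 * J2 - J1 ^ 2)) by ring.
    rewrite E in Q. 
    destruct (Rle_lt_dec (J0 * J2 - J1 ^ 2) 0); auto. exfalso.
    assert (J0 * (J0 * J2 - J1 ^ 2) <= 0).
    { rewrite <- (Rmult_0_r J0). apply Rmult_le_compat_l; lra. } lra. }
  apply (alg_key (c + 1) x J0 J1 J2 J3 J4 H0 I0).
  - replace (c + 1 + 1) with (c + 2) by ring. exact I1.
  - replace (c + 1 + 2) with (c + 3) by ring. exact I2.
  - exact HA.
  - cbv zeta. apply quad_pos; auto. right; right. lra.
Qed.

Lemma neg_div n d : n < 0 -> 0 < d -> n / d < 0.
Proof. intros. unfold Rdiv. rewrite <- (Rmult_0_l (/ d)). apply Rmult_lt_compat_r; auto. apply Rinv_0_lt_compat; auto. Qed.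

Lemma neg_mul n d : n < 0 -> 0 < d -> n * d < 0.
Proof. intros. rewrite <- (Rmult_0_l d). apply Rmult_lt_compat_r; auto. Qed.

Lemma h_decr c x y : -1 < c -> x < y ->
  Kf (c + 1) y ^ 2 / (Kf c y * Kf (c + 2) y) < Kf (c + 1) x ^ 2 / (Kf c x * Kf (c + 2) x).
Proof.
  intros Hc Hxy.
  assert (D0 : forall z, is_derive (fun y => Kf c y) z (-2 * Kf (c + 1) z)) by (intro; apply Kf_deriv; lra).
  assert (D1 : forall z, is_derive (fun y => Kf (c + 1) y) z (-2 * Kf (c + 2) z)).
  { intro z. replace (c + 2) with (c + 1 + 1) by ring. apply Kf_deriv; lra. }
  assert (D2 : forall z, is_derive (fun y => Kf (c + 2) y) z (-2 * Kf (c + 3) z)).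
  { intro z. replace (c + 3) with (c + 2 + 1) by ring. apply Kf_deriv; lra. }
  set (hh := fun z => Kf (c + 1) z ^ 2 / (Kf c z * Kf (c + 2) z)).
  set (dh := fun z => ((INR 2 * (-2 * Kf (c + 2) z) * Kf (c + 1) z ^ 1) * (Kf c z * Kf (c + 2) z)
                       - Kf (c + 1) z ^ 2 * (-2 * Kf (c + 1) z * Kf (c + 2) z + Kf c z * (-2 * Kf (c + 3) z)))
                       / (Kf c z * Kf (c + 2) z) ^ 2).
  assert (Dh : forall z, is_derive hh z (dh z)).
  { intro z. unfold hh, dh.
    apply (is_derive_div (fun y => Kf (c + 1) y ^ 2) (fun y => Kf c y * Kf (c + 2) y)).
    - apply (is_derive_pow (fun y => Kf (c + 1) y) 2 z). apply D1.
    - apply (is_derive_mult (fun y => Kf c y) (fun y => Kf (c + 2) y)); auto.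
      intros; unfold mult; simpl; ring.
    - pose proof (Kf_pos c z Hc). pose proof (Kf_pos (c + 2) z ltac:(lra)).
      apply Rgt_not_eq. apply Rmult_lt_0_compat; auto. }
  destruct (MVT_gen hh x y dh) as [xi [Hxi Heq]].
  - intros; apply Dh.
  - intros z _. apply continuity_pt_filterlim. apply (@ex_derive_continuous R_AbsRing R_NormedModule).
    exists (dh z). apply Dh.
  - assert (Hneg : dh xi < 0).
    { unfold dh. pose proof (key_ineq c xi Hc) as K.
      pose proof (Kf_pos c xi Hc). pose proof (Kf_pos (c + 1) xi ltac:(lra)).
      pose proof (Kf_pos (c + 2) xi ltac:(lra)). pose proof (Kf_pos (c + 3) xi ltac:(lra)).
      set (J0 := Kf c xi) in *. set (J1 := Kf (c + 1) xi) in *. set (J2 := Kf (c + 2) xi) in *.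
      set (J3 := Kf (c + 3) xi) in *.
      assert (HD : 0 < (J0 * J2) ^ 2) by (apply pow_lt; apply Rmult_lt_0_compat; auto).
      apply neg_div. 2: exact HD.
      replace (INR 2) with 2 by (simpl; ring).
      assert (E : 2 * (-2 * J2) * J1 ^ 1 * (J0 * J2) - J1 ^ 2 * (-2 * J1 * J2 + J0 * (-2 * J3))
                = - (2 * J1) * (2 * J0 * J2 ^ 2 - (J1 ^ 2 * J2 + J0 * J1 * J3))) by ring.
      rewrite E. assert (0 < 2 * J1 * (2 * J0 * J2 ^ 2 - (J1 ^ 2 * J2 + J0 * J1 * J3))) by (apply Rmult_lt_0_compat; lra).
      lra. }
    unfold hh in Heq.
    assert (dh xi * (y - x) < 0) by (apply neg_mul; lra).
    lra.
Qed.

Theorem theorem3p1 (nu : R) (hnu : nu < 0) :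
  forall x y : R, x < y -> Rnu nu y < Rnu nu x.
Proof.
  intros x y Hxy.
  assert (Hc : -1 < - nu - 1) by lra.
  assert (G0 : 0 < Gamma_fn (- nu)) by (apply Gamma_pos; lra).
  assert (G1 : 0 < Gamma_fn (- (nu - 1))) by (apply Gamma_pos; lra).
  assert (G2 : 0 < Gamma_fn (- (nu - 2))) by (apply Gamma_pos; lra).
  assert (E : forall z, Rnu nu z = (Gamma_fn (- nu) * Gamma_fn (- (nu - 2)) / Gamma_fn (- (nu - 1)) ^ 2)
             * (Kf (- nu - 1 + 1) z ^ 2 / (Kf (- nu - 1) z * Kf (- nu - 1 + 2) z))).
  { intro z. unfold Rnu. rewrite !Hermite_Kf.
    replace (- (nu - 1) - 1) with (- nu - 1 + 1) by ring.
    replace (- (nu - 2) - 1) with (- nu - 1 + 2) by ring.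
    pose proof (Kf_pos (- nu - 1) z Hc). pose proof (Kf_pos (- nu - 1 + 2) z ltac:(lra)).
    field. repeat split; apply Rgt_not_eq; auto. }
  rewrite !E. apply Rmult_lt_compat_l.
  - apply Rdiv_lt_0_compat. apply Rmult_lt_0_compat; auto. apply pow_lt; auto.
  - apply h_decr; auto.
Qed.
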